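(* Let $n\in\mathbb N$, $W=\{w_1,\dots,w_n\}$, $M=\{m_1,\dots,m_n\}$ disjoint, $\mu_{\mathrm{id}}$ the perfect marriage marrying $w_i$ to $m_i$ for all $i$, and $D=\{(i,j)\in\{1,\dots,n\}^2: i\ne j\}$. There exist functions $\succ_W:\{0,1\}^D\to\mathcal P(W,M)$ and $\succ_M:\{0,1\}^D\to\mathcal P(M,W)$ such that for all $\bar x,\bar y\in\{0,1\}^D$: (a) if $\mathrm{DISJ}(\bar x,\bar y)=1$ then $\mu_{\mathrm{id}}$ is the unique stable marriage with respect to $\succ_W(\bar x)$ and $\succ_M(\bar y)$; (b) if $\mathrm{DISJ}(\bar x,\bar y)=0$ then $\mu_{\mathrm{id}}$ is unstable with respect to $\succ_W(\bar x)$ and $\succ_M(\bar y)$.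
   Context: $\mathcal P(W,M)$ is the set of profiles assigning to each woman a preference list, i.e. a totally ordered subset of $M$ (men not on the list are unacceptable); $\mathcal P(M,W)$ analogously. A woman prefers $m$ over $m'$ if $m$ precedes $m'$ on her list, or $m$ is on her list and $m'$ is not (being single counts as having no spouse on the list); analogously for men. A marriage is a one-to-one map between a subset of $W$ and a subset of $M$ (others single). A marriage is stable if every married participant is married to someone on their list and there is no blocking pair $(w,m)$: $w$ prefers $m$ to her current situation and $m$ prefers $w$ to his. $\mathrm{DISJ}(\bar x,\bar y)=1$ if there is no index $(i,j)$ with $x^i_j=y^i_j=1$, and $0$ otherwise. *)

(* Defs.v *)
(* Women and men are both indexed by 'I_n:
   woman w_i is (i : 'I_n) on the women's side, man m_i is (i : 'I_n)
   on the men's side; the two sides are kept apart by role (disjoint). *)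
From mathcomp Require Import all_boot.
Set Implicit Arguments. Unset Strict Implicit. Unset Printing Implicit Defensive.

(* A preference list: a duplicate-free sequence (totally ordered subset). *)
Definition pref_list (n : nat) (L : seq 'I_n) : bool := uniq L.

Definition profile (n : nat) := 'I_n -> seq 'I_n.
Definition is_profile (n : nat) (P : profile n) : Prop :=
  forall a, pref_list (P a).

(* Agent with list L prefers b over its current situation s (None = single):
   b precedes s on L, or b is on L and s is not (single counts as not on L). *)
Definition prefers (n : nat) (L : seq 'I_n) (b : 'I_n) (s : option 'I_n) : bool :=
  (b \in L) &&
  match s with
  | None => true
  | Some c => (c \notin L) || (index b L < index c L)
  end.

Definition marriage (n : nat) := {ffun 'I_n -> option 'I_n}.
Definition is_marriage (n : nat) (mu : marriage n) : Prop :=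
  forall w w' m, mu w = Some m -> mu w' = Some m -> w = w'.

Definition spouse_of_man (n : nat) (mu : marriage n) (m : 'I_n) : option 'I_n :=
  [pick w | mu w == Some m].

Definition stable (n : nat) (PW PM : profile n) (mu : marriage n) : Prop :=
  is_marriage mu /\
  (forall w m, mu w = Some m -> m \in PW w /\ w \in PM m) /\
  (forall w m, ~~ (prefers (PW w) m (mu w) && prefers (PM m) w (spouse_of_man mu m))).

Definition mu_id (n : nat) : marriage n := [ffun w => Some w].

Definition Dset (n : nat) := {p : 'I_n * 'I_n | p.1 != p.2}.

Definition DISJ (n : nat) (x y : Dset n -> bool) : bool :=
  [forall d : Dset n, ~~ (x d && y d)].

(* Main.v *)
Require Import Defs.
From mathcomp Require Import all_boot.
Set Implicit Arguments. Unset Strict Implicit. Unset Printing Implicit Defensive.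

Definition xd n (x : Dset n -> bool) (i j : 'I_n) : bool :=
  if (insub (i, j) : option {p : 'I_n * 'I_n | p.1 != p.2}) is Some d then x d else false.

Definition L1 n (x : Dset n -> bool) (a : 'I_n) (f : 'I_n -> 'I_n -> bool) :=
  [seq j <- enum 'I_n | (j != a) && f a j].

Definition fW0 n (x : Dset n -> bool) : profile n :=
  fun i => [seq j <- enum 'I_n | (j != i) && xd x i j] ++ [:: i].
Definition fM0 n (y : Dset n -> bool) : profile n :=
  fun j => [seq i <- enum 'I_n | (i != j) && xd y i j] ++ [:: j].

Lemma uniqL n (P : pred 'I_n) a : ~~ P a -> uniq ([seq j <- enum 'I_n | P j] ++ [:: a]).
Proof.
move=> Pa; rewrite cat_uniq filter_uniq ?enum_uniq //= andbT orbF.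
by rewrite mem_filter (negbTE Pa).
Qed.

Lemma prefL n (P : pred 'I_n) a b : ~~ P a ->
  prefers ([seq j <- enum 'I_n | P j] ++ [:: a]) b (Some a) = P b.
Proof.
move=> Pa; rewrite /prefers.
set L := [seq j <- enum 'I_n | P j].
have aL : a \notin L by rewrite mem_filter (negbTE Pa).
have -> : (a \notin L ++ [:: a]) = false by rewrite mem_cat mem_seq1 eqxx orbT.
rewrite orFb !index_cat (negbTE aL) /= eqxx addn0 mem_cat mem_seq1.
have Lb : (b \in L) = P b by rewrite mem_filter mem_enum andbT.
rewrite Lb.
case Pb: (P b) => /=.
  by rewrite index_mem Lb Pb.
case: eqP => [->|_] /= //; by rewrite eqxx addn0 ltnn.
Qed.

Lemma spouse_id n m : spouse_of_man (mu_id n) m = Some m.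
Proof.
rewrite /spouse_of_man; case: pickP => [w|] /=.
  by rewrite ffunE => /eqP [->].
by move=> /(_ m); rewrite ffunE eqxx.
Qed.

Theorem lemma15 (n : nat) :
  exists (fW : (Dset n -> bool) -> profile n) (fM : (Dset n -> bool) -> profile n),
    (forall x, is_profile (fW x)) /\ (forall y, is_profile (fM y)) /\
    forall x y : Dset n -> bool,
      (DISJ x y = true ->
         stable (fW x) (fM y) (mu_id n) /\
         (forall mu : marriage n, stable (fW x) (fM y) mu -> mu = mu_id n)) /\
      (DISJ x y = false -> ~ stable (fW x) (fM y) (mu_id n)).
Proof.
exists (@fW0 n), (@fM0 n).
split; first by move=> x a; apply: uniqL; rewrite eqxx.
split; first by move=> y a; apply: uniqL; rewrite eqxx.
move=> x y.
have memL : forall (f : Dset n -> bool) a b,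
    (b \in [seq j <- enum 'I_n | (j != a) && xd f a j] ++ [:: a]) =
    (b == a) || xd f a b.
  move=> f a b; rewrite mem_cat mem_filter mem_enum andbT mem_seq1.
  by case: (b == a); rewrite ?orbT ?orbF.
have memM : forall (f : Dset n -> bool) a b,
    (b \in [seq j <- enum 'I_n | (j != a) && xd f j a] ++ [:: a]) =
    (b == a) || xd f b a.
  move=> f a b; rewrite mem_cat mem_filter mem_enum andbT mem_seq1.
  by case: (b == a); rewrite ?orbT ?orbF.
have nodisj : DISJ x y = true -> forall w m, xd x w m -> xd y w m -> False.
  move=> /forallP H w m; rewrite /xd.
  case: insubP => [d _ _|//] xd yd.
  by move: (H d); rewrite xd yd.
split.
  move=> Dxy.
  have Sid : stable (fW0 x) (fM0 y) (mu_id n).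
    split; first by move=> w w' m; rewrite !ffunE => -[->] [->].
    split.
      move=> w m; rewrite ffunE => -[<-].
      by rewrite /fW0 /fM0 memL memM eqxx.
    move=> w m; rewrite ffunE spouse_id /fW0 /fM0.
    rewrite (prefL (P := fun j => (j != w) && xd x w j)) ?eqxx //.
    rewrite (prefL (P := fun i => (i != m) && xd y i m)) ?eqxx //.
    apply/negP => /andP [/andP [_ h1] /andP [_ h2]].
    exact: (nodisj Dxy w m h1 h2).
  split => // mu [Hinj [Hacc Hbl]].
  have Hsome : forall w m, mu w = Some m -> m = w.
    move=> w m E; have [h1 h2] := Hacc w m E.
    move: h1 h2; rewrite /fW0 /fM0 memL memM.
    case: eqP => // _ /= h1; case: eqP => [->//|_] /= h2.
    by case: (nodisj Dxy w m h1 h2).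
  apply/ffunP => w; rewrite ffunE.
  case E: (mu w) => [m|]; first by rewrite (Hsome w m E).
  exfalso; move: (Hbl w w); rewrite E.
  have -> : spouse_of_man mu w = None.
    rewrite /spouse_of_man; case: pickP => [w' /eqP E'|//].
    by move: (Hsome _ _ E') => Ew; rewrite -Ew E in E'.
  by rewrite /prefers /fW0 /fM0 memL memM eqxx.
move=> Dxy [_ [_ Hbl]].
move: Dxy => /negbT /forallPn [[[i j] h]] /negbNE /andP [xi yi].
move: (Hbl i j); rewrite ffunE spouse_id /fW0 /fM0.
rewrite (prefL (P := fun j0 => (j0 != i) && xd x i j0)) ?eqxx //.
rewrite (prefL (P := fun i0 => (i0 != j) && xd y i0 j)) ?eqxx //.
have hji : j != i by rewrite eq_sym.
rewrite /xd hji h /=.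
rewrite (insubT (fun p : 'I_n * 'I_n => p.1 != p.2) h) /=.
by rewrite xi yi.
Qed.
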